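(* Let $A\in\mathbb{R}^{n\times n}$ with $A\ge0$, $B\in\mathbb{R}^{n\times m}$, $C\in\mathbb{R}^{p\times n}$, $E\in\mathbb{R}^{n\times q}$ with $E\ge 0$, and $F\in\mathbb{R}^{p\times r}$ (no sign restriction). Consider \[ x(t+1)=Ax(t)+Bu(t)+Ew(t),\qquad y(t)=Cx(t)+Fv(t), \] where $w(t)\in\mathbb{R}^q_+$ and $v(t)\in\mathbb{R}^r_+$ are random vectors with $\mathbb{E}[w(t)]=\mathbf{1}$ and $\mathbb{E}[v(t)]=\mathbf{1}$ for all $t$. Let the upper and lower estimates evolve as \[ \overline{x}(t+1)=(A-\overline{L}C)\overline{x}(t)+\overline{L}y(t)+Bu(t),\qquad \underline{x}(t+1)=(A-\underline{L}C)\underline{x}(t)+\underline{L}y(t)+Bu(t), \] with $\overline{L},\underline{L}\in\mathbb{R}^{n\times p}$, and let $u(t)=\overline{K}\,\overline{x}(t)+\underline{K}\,\underline{x}(t)$ with $\overline{K},\underline{K}\in\mathbb{R}^{m\times n}$. Let $X(t)=\mathbb{E}[(x(t),\overline{x}(t),\underline{x}(t))]\in\mathbb{R}^{3n}$ and $\mathcal{X}=\{(x,\overline{x},\underline{x}) : x,\overline{x},\underline{x}\in\mathbb{R}^n_+,\ \underline{x}\le x\le \overline{x}\}$, and suppose the initialization satisfies $X(0)\in\mathcal{X}$. Then the following are equivalent: (i) The matrices $A+B(\overline{K}+\underline{K})$, $A-\overline{L}C$ and $A-\underline{L}C$ are Schur, and \[ A+B(\overline{K}+\underline{K})\ge 0,\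 A+B\overline{K}\ge0,\ B\overline{K}\ge0,\ A-\overline{L}C\ge0,\ A-\underline{L}C\ge0,\ B\overline{K}+\underline{L}C\ge0, \] \[ \overline{L}F\mathbf{1}-E\mathbf{1}\ge0,\quad E\mathbf{1}-\underline{L}F\mathbf{1}\ge0,\quad \underline{L}F\mathbf{1}\ge 0. \] (ii) For all initial conditions with $x(0)\in\mathbb{R}^n_+$ and $X(0)\in\mathcal{X}$, the expected state satisfies $X(t)\in\mathcal{X}$ for all $t\ge0$ and $X(t)$ converges asymptotically to a single fixed point $X^*\in\mathcal{X}$.
   Context: All inequalities between matrices or vectors are element-wise; $\mathbb{R}^k_+$ is the closed nonnegative orthant and $\mathbf{1}$ denotes a vector of ones of the appropriate dimension. A square matrix is Schur if its spectral radius is less than $1$. *)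

(* Defs.v *)
From HB Require Import structures.
From mathcomp Require Import all_boot all_order all_algebra.
From mathcomp Require Import all_classical all_reals all_analysis.
From mathcomp Require Import complex.
Set Implicit Arguments. Unset Strict Implicit. Unset Printing Implicit Defensive.
Import Order.TTheory GRing.Theory Num.Theory numFieldNormedType.Exports.
Local Open Scope ring_scope.

Definition mx_nonneg (R : realType) (m k : nat) (M : 'M[R]_(m, k)) : Prop :=
  forall i j, 0 <= M i j.

Definition cv_le (R : realType) (n : nat) (x y : 'cV[R]_n) : Prop :=
  forall i, x i 0 <= y i 0.

Definition ones (R : realType) (k : nat) : 'cV[R]_k := const_mx 1.

(* Schur: spectral radius < 1, i.e. every (complex) eigenvalue of M has
   modulus < 1 (the spectral radius is the max of these moduli). *)
Definition is_Schur (R : realType) (n : nat) (M : 'M[R]_n) : Prop :=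
  forall z : R[i], eigenvalue (map_mx (fun x : R => (x%:C)%C) M) z -> `|z| < 1.

Definition in_calX (R : realType) (n : nat) (X : 'cV[R]_n * 'cV[R]_n * 'cV[R]_n)
  : Prop :=
  let: (x, xb, xl) := X in
  [/\ cv_le 0 x, cv_le 0 xb, cv_le 0 xl, cv_le xl x & cv_le x xb].

(* Realisation (sample path, for a fixed outcome) of the closed-loop system
     x(t+1)  = A x(t) + B u(t) + E w(t),      y(t) = C x(t) + F v(t),
     xb(t+1) = (A - Lb C) xb(t) + Lb y(t) + B u(t),
     xl(t+1) = (A - Ll C) xl(t) + Ll y(t) + B u(t),
     u(t)    = Kb xb(t) + Kl xl(t),
   returning (x(t), xb(t), xl(t)). *)
Fixpoint traj (R : realType) (n m p q r : nat)
  (A : 'M[R]_n) (B : 'M[R]_(n, m)) (C : 'M[R]_(p, n)) (E : 'M[R]_(n, q))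
  (F : 'M[R]_(p, r)) (Lb Ll : 'M[R]_(n, p)) (Kb Kl : 'M[R]_(m, n))
  (w : nat -> 'cV[R]_q) (v : nat -> 'cV[R]_r) (x0 xb0 xl0 : 'cV[R]_n)
  (t : nat) : 'cV[R]_n * 'cV[R]_n * 'cV[R]_n :=
  match t with
  | 0 => (x0, xb0, xl0)
  | t'.+1 =>
      let: (x, xb, xl) :=
        traj A B C E F Lb Ll Kb Kl w v x0 xb0 xl0 t' in
      let u := Kb *m xb + Kl *m xl in
      let y := C *m x + F *m v t' in
      (A *m x + B *m u + E *m w t',
       (A - Lb *m C) *m xb + Lb *m y + B *m u,
       (A - Ll *m C) *m xl + Ll *m y + B *m u)
  end.

(* componentwise expectation of a random column vector, as a real vector
   (all the random vectors below are integrable, so the expectations are finite) *)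
Definition Evec (d : measure_display) (T : measurableType d) (R : realType)
  (P : probability T R) (k : nat) (X : T -> 'cV[R]_k) : 'cV[R]_k :=
  \col_i fine (expectation P (fun om => X om i 0)).

Definition integrable_rvec (d : measure_display) (T : measurableType d)
  (R : realType) (P : probability T R) (k : nat) (X : T -> 'cV[R]_k) : Prop :=
  forall i, measurable_fun setT (fun om => X om i 0) /\
            P.-integrable setT (fun om => (X om i 0)%:E).

(* Main.v *)
Require Import Defs.
From HB Require Import structures.
From mathcomp Require Import all_boot all_order all_algebra.
From mathcomp Require Import all_classical all_reals all_analysis.
From mathcomp Require Import complex.
From mathcomp Require Import ring lra.
Import Order.TTheory GRing.Theory Num.Theory numFieldNormedType.Exports.
Local Open Scope classical_set_scope.
Local Open Scope ring_scope.
Set Implicit Arguments. Unset Strict Implicit. Unset Printing Implicit Defensive.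

Section To0.
Variable K : numFieldType.
Definition to0 (s : nat -> K) :=
  forall e : K, 0 < e -> exists N, forall t, (N <= t)%N -> `|s t| < e.

Lemma to0_ext (s s' : nat -> K) : (forall t, s t = s' t) -> to0 s -> to0 s'.
Proof. by move=> h hs e e0; have [N hN] := hs e e0; exists N => t /hN; rewrite h. Qed.

Lemma to0_0 : to0 (fun _ => 0).
Proof. by move=> e e0; exists 0%N => t _; rewrite normr0. Qed.

Lemma to0D (s1 s2 : nat -> K) : to0 s1 -> to0 s2 -> to0 (fun t => s1 t + s2 t).
Proof.
move=> h1 h2 e e0.
have e2 : 0 < e / 2 by rewrite divr_gt0 // ltr0Sn.
have [N1 hN1] := h1 _ e2; have [N2 hN2] := h2 _ e2.
exists (maxn N1 N2) => t; rewrite geq_max => /andP[t1 t2].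
rewrite (splitr e); apply: le_lt_trans (ler_normD _ _) _.
by apply: ltrD; [apply: hN1|apply: hN2].
Qed.

Lemma to0M (c : K) (s : nat -> K) : to0 s -> to0 (fun t => c * s t).
Proof.
move=> h e e0.
have c1 : 0 < `|c| + 1 by apply: ltr_wpDl.
have [N hN] := h (e / (`|c| + 1)) (divr_gt0 e0 c1).
exists N => t /hN ht; rewrite normrM.
apply: le_lt_trans (_ : `|c| * `|s t| <= (`|c| + 1) * `|s t|) _.
  by apply: ler_wpM2r => //; rewrite lerDl.
apply: lt_le_trans (_ : (`|c| + 1) * (e / (`|c| + 1)) <= e).
  by rewrite ltr_pM2l.
by rewrite mulrC divfK // lt0r_neq0.
Qed.

Lemma to0_sum (I : Type) (r : seq I) (f : I -> nat -> K) :
  (forall i, to0 (f i)) -> to0 (fun t => \sum_(i <- r) f i t).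
Proof.
move=> h; elim: r => [|i r IH].
  by apply: to0_ext to0_0 => t; rewrite big_nil.
by apply: to0_ext (to0D (h i) IH) => t; rewrite big_cons.
Qed.

Lemma to0_shift (s : nat -> K) : to0 (fun t => s t.+1) -> to0 s.
Proof.
move=> h e e0; have [N hN] := h e e0; exists N.+1 => t.
by case: t => // t; rewrite ltnS => /hN.
Qed.

Definition vto0 k (s : nat -> 'cV[K]_k) := forall i, to0 (fun t => s t i 0).

Lemma vto0_ext k (s s' : nat -> 'cV[K]_k) : (forall t, s t = s' t) -> vto0 s -> vto0 s'.
Proof. by move=> h hs i; apply: to0_ext (hs i) => t; rewrite h. Qed.

Lemma vto0_0 k : vto0 (fun _ => (0 : 'cV[K]_k)).
Proof. by move=> i; apply: to0_ext to0_0 => t; rewrite mxE. Qed.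

Lemma vto0D k (s1 s2 : nat -> 'cV[K]_k) : vto0 s1 -> vto0 s2 -> vto0 (fun t => s1 t + s2 t).
Proof. by move=> h1 h2 i; apply: to0_ext (to0D (h1 i) (h2 i)) => t; rewrite mxE. Qed.

Lemma vto0N k (s : nat -> 'cV[K]_k) : vto0 s -> vto0 (fun t => - s t).
Proof.
move=> h i; apply: to0_ext (to0M (-1) (h i)) => t.
by rewrite mxE mulN1r.
Qed.

Lemma vto0_mul k l (M : 'M[K]_(l, k)) (s : nat -> 'cV[K]_k) :
  vto0 s -> vto0 (fun t => M *m s t).
Proof.
move=> h i; apply: to0_ext (to0_sum (index_enum _) (fun j => to0M (M i j) (h j))) => t.
by rewrite mxE.
Qed.

End To0.
Arguments to0 {K}.
Arguments vto0 {K k}.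

Section Contract.
Variable R : realType.

Lemma to0_cvg (s : nat -> R) : s @ \oo --> 0 -> to0 s.
Proof.
move=> /cvgr0Pnorm_lt h e e0; have [N _ hN] := h e e0.
by exists N => t tN; apply: hN.
Qed.

Lemma to0_contract (a b : nat -> R) (rho : R) :
  0 <= rho -> rho < 1 -> (forall t, 0 <= a t) ->
  (forall t, a t.+1 <= rho * a t + b t) -> to0 b -> to0 a.
Proof.
move=> r0 r1 a0 hab hb e e0.
have e2 : 0 < e / 2 by rewrite divr_gt0 // ltr0Sn.
have r1' : 0 < 1 - rho by rewrite subr_gt0.
have [N1 hN1] := hb (e / 2 * (1 - rho)) (mulr_gt0 e2 r1').
have key : forall k, a (N1 + k)%N <= rho ^+ k * a N1 + e / 2.
  elim => [|k ih]; first by rewrite addn0 expr0 mul1r lerDl ltW.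
  rewrite addnS; apply: le_trans (hab _) _.
  have hb' : b (N1 + k)%N <= e / 2 * (1 - rho).
    by apply: le_trans (ler_norm _) (ltW (hN1 _ (leq_addr _ _))).
  have := ler_wpM2l r0 ih.
  rewrite exprS -mulrA; nra.
have ha1 : 0 < a N1 + 1 by apply: ltr_wpDl.
have rr : `|rho| < 1 by rewrite ger0_norm.
have [K _ hK] := (cvgr0Pnorm_lt _).1 (cvg_expr rr)
   (e / 2 / (a N1 + 1)) (divr_gt0 e2 ha1).
exists (N1 + K)%N => t tN.
have -> : t = (N1 + (t - N1))%N by rewrite subnKC // (leq_trans (leq_addr _ _) tN).
rewrite ger0_norm //; apply: le_lt_trans (key _) _.
have hk : `|rho ^+ (t - N1)| < e / 2 / (a N1 + 1).
  by apply: hK => /=; rewrite leq_subRL ?(leq_trans (leq_addr _ _) tN).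
rewrite ger0_norm ?exprn_ge0 // in hk.
have : rho ^+ (t - N1) * (a N1 + 1) < e / 2 by rewrite -ltr_pdivlMr.
have := a0 N1; have := exprn_ge0 (t - N1) r0; nra.
Qed.

End Contract.

Section Complex.
Variable R : realType.
Local Notation C := (R[i]).
Local Notation rc := (fun x : R => (x%:C)%C).

Lemma normC_real (x : R) : `|(x%:C)%C| = (`|x|%:C)%C.
Proof. by rewrite normc_def /= expr0n /= addr0 sqrtr_sqr. Qed.

Lemma ge0C (z : C) : 0 <= z -> exists r : R, 0 <= r /\ z = (r%:C)%C.
Proof. case: z => a b; rewrite lecE /= => /andP[/eqP h1 h]; subst; by exists a. Qed.

Lemma rcD (a b : R) : ((a + b)%:C = a%:C + b%:C)%C.
Proof. by rewrite rmorphD. Qed.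
Lemma rcM (a b : R) : ((a * b)%:C = a%:C * b%:C)%C.
Proof. by rewrite rmorphM. Qed.

Lemma to0_RC (u : nat -> R) : to0 u -> to0 (fun t => (u t)%:C%C).
Proof.
move=> h e e0; have [r [r0 er]] := ge0C (ltW e0); subst e.
have r0' : 0 < r by rewrite -ltcR.
have [N hN] := h r r0'; exists N => t /hN ht.
by rewrite normC_real ltcR.
Qed.

Lemma to0_CR (u : nat -> R) : to0 (fun t => (u t)%:C%C) -> to0 u.
Proof.
move=> h e e0; have e0' : 0 < (e%:C)%C :> C by rewrite ltcR.
have [N hN] := h _ e0'.
by exists N => t /hN; rewrite normC_real ltcR.
Qed.

Definition nr (z : C) : R := complex.Re `|z|.
Lemma nrE (z : C) : `|z| = ((nr z)%:C)%C.
Proof. by rewrite /nr; have [r [_ ->]] := ge0C (normr_ge0 z). Qed.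
Lemma nr_ge0 z : 0 <= nr z.
Proof. by have := normr_ge0 z; rewrite nrE ler0c. Qed.

Lemma to0C_contract (s g : nat -> C) (z : C) :
  `|z| < 1 -> (forall t, s t.+1 = z * s t + g t) -> to0 g -> to0 s.
Proof.
move=> hz hs hg.
have hnr : to0 (fun t => nr (s t)).
  apply: (@to0_contract _ _ (fun t => nr (g t)) (nr z)).
  - exact: nr_ge0.
  - by rewrite -ltcR -nrE.
  - by move=> t; apply: nr_ge0.
  - move=> t; rewrite -lecR rcD rcM -!nrE hs.
    by apply: le_trans (ler_normD _ _) _; rewrite normrM.
  - apply: to0_CR => e e0; have [N hN] := hg e e0.
    by exists N => t /hN; rewrite -nrE normr_id.
move=> e e0; have [r [r0 er]] := ge0C (ltW e0); subst e.
have r0' : 0 < r by rewrite -ltcR.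
have [N hN] := hnr r r0'; exists N => t /hN.
by rewrite nrE ltcR ger0_norm // nr_ge0.
Qed.


Lemma track_C n' (N : 'M[C]_n'.+1) (rs : seq C) :
  (forall z, z \in rs -> `|z| < 1) ->
  forall D Ec : nat -> 'cV[C]_n'.+1, (forall t, D t.+1 = N *m D t + Ec t) -> vto0 Ec ->
  vto0 (fun t => horner_mx N (\prod_(z <- rs) ('X - z%:P)) *m D t) -> vto0 D.
Proof.
elim: rs => [|z rs IH] hz D Ec hD hE hP.
  by apply: vto0_ext hP => t; rewrite big_nil rmorph1 mul1mx.
set Pm := horner_mx N (\prod_(y <- rs) ('X - y%:P)).
apply: (IH _ D Ec hD hE); first by move=> y hy; apply: hz; rewrite in_cons hy orbT.
set G := fun t => Pm *m D t.
have hQ : vto0 (fun t => (N - z%:M) *m G t).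
  apply: vto0_ext hP => t.
  by rewrite big_cons rmorphM rmorphB /= horner_mx_X horner_mx_C -mulmxE -mulmxA.
have comm : Pm *m N = N *m Pm.
  have := comm_horner_mx2 N (\prod_(y <- rs) ('X - y%:P)) 'X.
  by rewrite horner_mx_X /GRing.comm -!mulmxE.
have hG : forall t, G t.+1 = z *: G t + ((N - z%:M) *m G t + Pm *m Ec t).
  move=> t; rewrite /G hD mulmxDr mulmxA comm -mulmxA mulmxBl mul_scalar_mx.
  by rewrite addrA [z *: _ + _]addrC subrK.
have hg := vto0D hQ (vto0_mul Pm hE).
move=> i; apply: (@to0C_contract _ _ z (hz z (mem_head _ _))) (hg i).
by move=> t; rewrite hG !mxE.
Qed.

End Complex.

Lemma track_R (R : realType) n (M : 'M[R]_n) : is_Schur M ->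
  forall d e : nat -> 'cV[R]_n, (forall t, d t.+1 = M *m d t + e t) -> vto0 e -> vto0 d.
Proof.
case: n M => [|n'] M hM d e hd he; first by case.
pose f := real_complex R.
pose N := map_mx f M.
have hD : forall t, map_mx f (d t.+1) = N *m map_mx f (d t) + map_mx f (e t).
  by move=> t; rewrite hd map_mxD map_mxM.
have hE : vto0 (fun t => map_mx f (e t)).
  by move=> i; apply: to0_ext (to0_RC (he i)) => t; rewrite mxE.
have [rs hrs] := closed_field_poly_normal (char_poly N).
rewrite (monicP (char_poly_monic N)) scale1r in hrs.
have hz : forall z, z \in rs -> `|z| < 1.
  move=> z hz; apply: hM; rewrite eigenvalue_root_char hrs root_prod_XsubC //.
have hP : vto0 (fun t => horner_mx N (\prod_(z <- rs) ('X - z%:P)) *m map_mx f (d t)).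
  by apply: vto0_ext (@vto0_0 _ _) => t; rewrite -hrs Cayley_Hamilton mul0mx.
have := track_C hz hD hE hP.
by move=> h i; apply: to0_CR; apply: to0_ext (h i) => t; rewrite mxE.
Qed.

Section Alg.
Variables (R : realType) (n m p q r : nat)
  (A : 'M[R]_n) (B : 'M[R]_(n, m)) (C : 'M[R]_(p, n)) (E : 'M[R]_(n, q))
  (F : 'M[R]_(p, r)) (Lb Ll : 'M[R]_(n, p)) (Kb Kl : 'M[R]_(m, n)).

Lemma alg_eb (x xb xl : 'cV[R]_n) (wq : 'cV[R]_q) (vr : 'cV[R]_r) :
  ((A - Lb *m C) *m xb + Lb *m (C *m x + F *m vr) + B *m (Kb *m xb + Kl *m xl)) -
  (A *m x + B *m (Kb *m xb + Kl *m xl) + E *m wq) =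
  (A - Lb *m C) *m (xb - x) + (Lb *m F *m vr - E *m wq).
Proof.
rewrite !(mulmxDr, mulmxBr, mulmxDl, mulmxBl, mulNmx, mulmxN, mulmxA).
apply/colP => i; rewrite !mxE; ring.
Qed.

End Alg.
Section Prob.
Context (d : measure_display) (T : measurableType d) (R : realType)
  (P : probability T R).

Definition Ehas (k : nat) (X : T -> 'cV[R]_k) (Y : 'cV[R]_k) :=
  forall i, P.-integrable setT (EFin \o (fun om => X om i 0)) /\
    expectation P (fun om => X om i 0) = (Y i 0)%:E.

Lemma expectationE (f : T -> R) : expectation P f = (\int[P]_x (f x)%:E)%E.
Proof. by rewrite unlock. Qed.

Lemma Ehas_add k (X X' : T -> 'cV[R]_k) Y Y' :
  Ehas X Y -> Ehas X' Y' -> Ehas (fun om => X om + X' om) (Y + Y').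
Proof.
move=> HX HX' i; have [i1 e1] := HX i; have [i2 e2] := HX' i.
have -> : (fun om => (X om + X' om) i 0) = (fun om => X om i 0 + X' om i 0).
  by apply/funext => om; rewrite mxE.
split.
  have := integrableD measurableT i1 i2.
  by apply: eq_integrable => // x _ /=.
rewrite !expectationE in e1 e2 *.
under eq_integral do rewrite EFinD.
by rewrite integralD // e1 e2 mxE.
Qed.

Lemma Ehas_mul k l (M : 'M[R]_(l, k)) (X : T -> 'cV[R]_k) Y :
  Ehas X Y -> Ehas (fun om => M *m X om) (M *m Y).
Proof.
move=> HX i.
have -> : (fun om => (M *m X om) i 0) = (fun om => \sum_j M i j * X om j 0).
  by apply/funext => om; rewrite mxE.
have hi : forall j, P.-integrable setT (fun x => (M i j)%:E * (X x j 0)%:E)%E.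
  by move=> j; apply: integrableZl => //; have [] := HX j.
split.
  have := integrable_sum measurableT (index_enum _) (P := predT) (fun j _ => hi j).
  apply: eq_integrable => // x _ /=.
  by rewrite -sumEFin; apply: eq_bigr => j _; rewrite EFinM.
rewrite expectationE.
under eq_integral do rewrite -sumEFin.
under eq_integral do under eq_bigr do rewrite EFinM.
rewrite integral_sum // mxE -sumEFin; apply: eq_bigr => j _.
rewrite integralZl //; last by have [] := HX j.
by have [_ e] := HX j; rewrite EFinM -e expectationE.
Qed.

Lemma Ehas_cst k (c : 'cV[R]_k) : Ehas (fun _ => c) c.
Proof.
move=> i; split.
  exact: (finite_measure_integrable_cst P (c i 0) measurableT).
by rewrite (_ : (fun _ => c i 0) = cst (c i 0)) // expectation_cst.
Qed.

Lemma Ehas_rand k (w : T -> 'cV[R]_k) :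
  (forall om, cv_le 0 (w om)) ->
  (forall i, measurable_fun setT (fun om => w om i 0)) ->
  (forall i, expectation P (fun om => w om i 0) = 1%E) ->
  Ehas w (ones R k).
Proof.
move=> h0 hm he i; split; last by rewrite he /ones mxE.
apply/integrableP; split; first exact/measurable_realfun.measurable_EFinP.
have := he i; rewrite expectationE => e.
rewrite (eq_integral (fun x => (w x i 0)%:E)).
  by rewrite e ltry.
move=> x _ /=; rewrite ger0_norm //.
by have := h0 x i; rewrite mxE.
Qed.

Lemma Ehas_Evec k (X : T -> 'cV[R]_k) Y : Ehas X Y -> Evec P X = Y.
Proof. by move=> h; apply/matrixP => i j; rewrite ord1 mxE; have [_ ->] := h i. Qed.

Lemma integrable_Ehas k (X : T -> 'cV[R]_k) :
  integrable_rvec P X -> Ehas X (Evec P X).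
Proof.
move=> h i; have [hm hi] := h i; split => //.
rewrite mxE fineK //.
by apply: expectation_fin_num; apply/Lfun1_integrable.
Qed.

Lemma Ehas_integrable k (X : T -> 'cV[R]_k) Y : Ehas X Y -> integrable_rvec P X.
Proof.
move=> h i; have [hi _] := h i; split => //.
by apply/measurable_realfun.measurable_EFinP; have /integrableP[] := hi.
Qed.

End Prob.
Section Main.
Variables (R : realType) (n m p q r : nat)
  (A : 'M[R]_n) (B : 'M[R]_(n, m)) (C : 'M[R]_(p, n)) (E : 'M[R]_(n, q))
  (F : 'M[R]_(p, r)) (Lb Ll : 'M[R]_(n, p)) (Kb Kl : 'M[R]_(m, n)).

Lemma alg_el (x xb xl : 'cV[R]_n) (wq : 'cV[R]_q) (vr : 'cV[R]_r) :
  (A *m x + B *m (Kb *m xb + Kl *m xl) + E *m wq) -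
  ((A - Ll *m C) *m xl + Ll *m (C *m x + F *m vr) + B *m (Kb *m xb + Kl *m xl)) =
  (A - Ll *m C) *m (x - xl) + (E *m wq - Ll *m F *m vr).
Proof.
rewrite !(mulmxDr, mulmxBr, mulmxDl, mulmxBl, mulNmx, mulmxN, mulmxA).
apply/colP => i; rewrite !mxE; ring.
Qed.

Lemma alg_xl (x xb xl : 'cV[R]_n) (vr : 'cV[R]_r) :
  (A - Ll *m C) *m xl + Ll *m (C *m x + F *m vr) + B *m (Kb *m xb + Kl *m xl) =
  (A + B *m (Kb + Kl)) *m xl + (B *m Kb + Ll *m C) *m (x - xl) +
  B *m Kb *m (xb - x) + Ll *m F *m vr.
Proof.
rewrite !(mulmxDr, mulmxBr, mulmxDl, mulmxBl, mulNmx, mulmxN, mulmxA).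
apply/colP => i; rewrite !mxE; ring.
Qed.

Lemma traj_S w v x0 xb0 xl0 t :
  traj A B C E F Lb Ll Kb Kl w v x0 xb0 xl0 t.+1 =
  let X := traj A B C E F Lb Ll Kb Kl w v x0 xb0 xl0 t in
  (A *m X.1.1 + B *m (Kb *m X.1.2 + Kl *m X.2) + E *m w t,
   (A - Lb *m C) *m X.1.2 + Lb *m (C *m X.1.1 + F *m v t) + B *m (Kb *m X.1.2 + Kl *m X.2),
   (A - Ll *m C) *m X.2 + Ll *m (C *m X.1.1 + F *m v t) + B *m (Kb *m X.1.2 + Kl *m X.2)).
Proof. by rewrite /=; case: (traj _ _ _ _ _ _ _ _ _ _ _ _ _ _ t) => [[x xb] xl]. Qed.

Lemma Ehas_traj (d : measure_display) (T : measurableType d) (P : probability T R)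
  (w : nat -> T -> 'cV[R]_q) (v : nat -> T -> 'cV[R]_r) x0 xb0 xl0 X0 XB0 XL0 :
  (forall t, Ehas P (w t) (ones R q)) -> (forall t, Ehas P (v t) (ones R r)) ->
  Ehas P x0 X0 -> Ehas P xb0 XB0 -> Ehas P xl0 XL0 ->
  forall t,
  let Y := traj A B C E F Lb Ll Kb Kl (fun _ => ones R q) (fun _ => ones R r) X0 XB0 XL0 t in
  [/\ Ehas P (fun om => (traj A B C E F Lb Ll Kb Kl (w^~ om) (v^~ om) (x0 om) (xb0 om) (xl0 om) t).1.1) Y.1.1,
      Ehas P (fun om => (traj A B C E F Lb Ll Kb Kl (w^~ om) (v^~ om) (x0 om) (xb0 om) (xl0 om) t).1.2) Y.1.2 &
      Ehas P (fun om => (traj A B C E F Lb Ll Kb Kl (w^~ om) (v^~ om) (x0 om) (xb0 om) (xl0 om) t).2) Y.2].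
Proof.
move=> hw hv h0 hb0 hl0; elim => [|t [IH1 IH2 IH3]]; first by rewrite /=; split.
rewrite traj_S.
have hu := Ehas_add (Ehas_mul Kb IH2) (Ehas_mul Kl IH3).
split.
- under [fun om => _]funext => om do rewrite traj_S.
  rewrite /=.
  apply: Ehas_add; last exact: Ehas_mul (hw t).
  exact: Ehas_add (Ehas_mul _ IH1) (Ehas_mul _ hu).
- under [fun om => _]funext => om do rewrite traj_S.
  rewrite /=.
  apply: Ehas_add; last exact: Ehas_mul hu.
  apply: Ehas_add (Ehas_mul _ IH2) (Ehas_mul _ _).
  exact: Ehas_add (Ehas_mul _ IH1) (Ehas_mul _ (hv t)).
- under [fun om => _]funext => om do rewrite traj_S.
  rewrite /=.
  apply: Ehas_add; last exact: Ehas_mul hu.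
  apply: Ehas_add (Ehas_mul _ IH3) (Ehas_mul _ _).
  exact: Ehas_add (Ehas_mul _ IH1) (Ehas_mul _ (hv t)).
Qed.

End Main.
Section Cvg. Variable R : realType.
Lemma ent_le k (M : 'cV[R]_k) i : `|M i 0| <= `|M|.
Proof. by rewrite [leRHS]/Num.Def.normr /= mx_normrE; apply/bigmax_geP; right => /=; exists (i, 0). Qed.
Lemma ent_lt k (M : 'cV[R]_k) e : 0 < e -> (forall i, `|M i 0| < e) -> `|M| < e.
Proof. move=> e0 h. rewrite [ltLHS]/Num.Def.normr /= mx_normrE; apply: bigmax_lt => // -[i j] _ /=. by rewrite ord1. Qed.
Lemma vto0_cvg k (s : nat -> 'cV[R]_k) (L : 'cV[R]_k) : vto0 (fun t => s t - L) -> s @ \oo --> L.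
Proof.
move=> h; apply/cvgrPdist_lt => e e0.
have /fin_all_exists [N hN] : forall i, exists N, forall t, (N <= t)%N -> `|(s t - L) i 0| < e.
  by move=> i; apply: h.
exists (\max_i N i) => // t /= tN.
rewrite -normrN opprB; apply: ent_lt => // i; apply: hN.
exact: leq_trans (leq_bigmax _) tN.
Qed.
Lemma cvg_vto0 k (s : nat -> 'cV[R]_k) (L : 'cV[R]_k) : s @ \oo --> L -> vto0 (fun t => s t - L).
Proof.
move=> /cvgrPdist_lt h i e e0; have [N _ hN] := h e e0.
exists N => t /hN /= ht; apply: le_lt_trans (ent_le _ _) _.
by rewrite -normrN opprB.
Qed.
End Cvg.

Section NN.
Variable R : realType.

Lemma cv_le0P k (v : 'cV[R]_k) : cv_le 0 v <-> forall i, 0 <= v i 0.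
Proof. by split => h i; move: (h i); rewrite mxE. Qed.

Lemma nn_mul k l (M : 'M[R]_(k, l)) v : mx_nonneg M -> cv_le 0 v -> cv_le 0 (M *m v).
Proof.
move=> hM /cv_le0P hv; apply/cv_le0P => i; rewrite mxE.
by apply: sumr_ge0 => j _; apply: mulr_ge0.
Qed.

Lemma nn_add k (u v : 'cV[R]_k) : cv_le 0 u -> cv_le 0 v -> cv_le 0 (u + v).
Proof.
move=> /cv_le0P hu /cv_le0P hv; apply/cv_le0P => i; rewrite mxE.
exact: addr_ge0.
Qed.

Lemma nn_vec k (c : 'cV[R]_k) : mx_nonneg c -> cv_le 0 c.
Proof. by move=> h; apply/cv_le0P => i. Qed.

Lemma cv_leB k (u v : 'cV[R]_k) : cv_le u v <-> cv_le 0 (v - u).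
Proof.
split => h i; move: (h i); rewrite !mxE; first by rewrite subr_ge0.
by rewrite subr_ge0.
Qed.

Lemma calX_of (n : nat) (x xb xl : 'cV[R]_n) :
  cv_le 0 xl -> cv_le 0 (x - xl) -> cv_le 0 (xb - x) -> in_calX (x, xb, xl).
Proof.
move=> h1 h2 h3.
have hx : x = xl + (x - xl) by rewrite addrC subrK.
have hxb : xb = x + (xb - x) by rewrite addrC subrK.
have h0x : cv_le 0 x by rewrite hx; apply: nn_add.
split => //.
- by rewrite hxb; apply: nn_add.
- by apply/cv_leB.
- by apply/cv_leB.
Qed.

Lemma calX_to (n : nat) (x xb xl : 'cV[R]_n) :
  in_calX (x, xb, xl) -> [/\ cv_le 0 xl, cv_le 0 (x - xl) & cv_le 0 (xb - x)].
Proof. by case=> _ _ h1 /cv_leB h2 /cv_leB h3. Qed.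

Lemma lin_ge0 (a c : R) : (forall s, 0 < s -> 0 <= s * a + c) -> 0 <= a.
Proof.
move=> h; rewrite leNgt; apply/negP => a0.
have c1 : 0 < `|c| + 1 by apply: ltr_wpDl.
have s0 : 0 < (`|c| + 1) / (- a) by rewrite divr_gt0 // oppr_gt0.
have := h _ s0.
have -> : (`|c| + 1) / (- a) * a = - (`|c| + 1).
  by field; exact: ltr0_neq0.
have := ler_norm c; lra.
Qed.

Lemma ent_nonneg k (M : 'M[R]_k) (c : 'cV[R]_k) :
  (forall s : R, 0 < s -> forall j, cv_le 0 (M *m (s *: delta_mx j 0) + c)) -> mx_nonneg M.
Proof.
move=> h i j; apply: (@lin_ge0 _ (c i 0)) => s s0.
have := h s s0 j i; rewrite -scalemxAr -colE !mxE.
by rewrite mulrC.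
Qed.

Lemma delta_nn k (j : 'I_k) (s : R) : 0 <= s -> cv_le 0 (s *: delta_mx j (0 : 'I_1)).
Proof. by move=> s0; apply/cv_le0P => i; rewrite !mxE mulr_ge0 // ler0n. Qed.

Lemma lim_nn k (s : nat -> 'cV[R]_k) L :
  vto0 (fun t => s t - L) -> (forall t, cv_le 0 (s t)) -> cv_le 0 L.
Proof.
move=> h hs; apply/cv_le0P => i; rewrite leNgt; apply/negP => L0.
have L0' : 0 < - L i 0 by rewrite oppr_gt0.
have [N hN] := h i (- L i 0) L0'.
have := hN N (leqnn N); rewrite mxE.
have := (cv_le0P _).1 (hs N) i.
move=> h1 h2; have := ler_norm (s N i 0 - L i 0); rewrite mxE in h2; lra.
Qed.

End NN.

Section Det.
Variables (R : realType) (n m p q r : nat)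
  (A : 'M[R]_n) (B : 'M[R]_(n, m)) (C : 'M[R]_(p, n)) (E : 'M[R]_(n, q))
  (F : 'M[R]_(p, r)) (Lb Ll : 'M[R]_(n, p)) (Kb Kl : 'M[R]_(m, n)).

Definition dtraj (X0 : 'cV[R]_n * 'cV[R]_n * 'cV[R]_n) t :=
  traj A B C E F Lb Ll Kb Kl (fun _ => ones R q) (fun _ => ones R r) X0.1.1 X0.1.2 X0.2 t.
Definition dx X0 t := (dtraj X0 t).1.1.
Definition dxb X0 t := (dtraj X0 t).1.2.
Definition dxl X0 t := (dtraj X0 t).2.
Definition eb X0 t := dxb X0 t - dx X0 t.
Definition el X0 t := dx X0 t - dxl X0 t.

Local Notation Mk := (A + B *m (Kb + Kl)).
Local Notation Mb := (A - Lb *m C).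
Local Notation Ml := (A - Ll *m C).
Local Notation cb := (Lb *m F *m ones R r - E *m ones R q).
Local Notation cl := (E *m ones R q - Ll *m F *m ones R r).
Local Notation cF := (Ll *m F *m ones R r).
Local Notation Gl := (B *m Kb + Ll *m C).
Local Notation Gb := (B *m Kb).

Lemma eb_S X0 t : eb X0 t.+1 = Mb *m eb X0 t + cb.
Proof. by rewrite /eb /dxb /dx /dtraj traj_S /= alg_eb. Qed.

Lemma el_S X0 t : el X0 t.+1 = Ml *m el X0 t + cl.
Proof. by rewrite /el /dxl /dx /dtraj traj_S /= alg_el. Qed.

Lemma xl_S X0 t : dxl X0 t.+1 = Mk *m dxl X0 t + Gl *m el X0 t + Gb *m eb X0 t + cF.
Proof. by rewrite /el /eb /dxl /dxb /dx /dtraj traj_S /= alg_xl. Qed.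

Lemma d0 X0 : [/\ dx X0 0 = X0.1.1, dxb X0 0 = X0.1.2 & dxl X0 0 = X0.2].
Proof. by []. Qed.

Lemma invariance X0 :
  mx_nonneg Mk -> mx_nonneg Gl -> mx_nonneg Gb -> mx_nonneg Mb -> mx_nonneg Ml ->
  mx_nonneg cb -> mx_nonneg cl -> mx_nonneg cF ->
  in_calX X0 -> forall t, in_calX (dx X0 t, dxb X0 t, dxl X0 t).
Proof.
move=> hk hgl hgb hb hl hcb hcl hcf h0; elim => [|t IH].
  by case: X0 h0 => [[x xb] xl].
have [h1 h2 h3] := calX_to IH.
apply: calX_of.
- rewrite xl_S; apply: nn_add; last exact: nn_vec.
  by apply: nn_add; [apply: nn_add|]; apply: nn_mul.
- by rewrite -/(el X0 t.+1) el_S; apply: nn_add; [apply: nn_mul|apply: nn_vec].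
- by rewrite -/(eb X0 t.+1) eb_S; apply: nn_add; [apply: nn_mul|apply: nn_vec].
Qed.

End Det.

Section Fix.
Variable R : realType.

Lemma schur_unit n (M : 'M[R]_n) : is_Schur M -> (1%:M - M) \in unitmx.
Proof.
move=> hM; rewrite unitmxE unitfE; apply/negP => /det0P [v v0 hv].
have hvM : v *m M = v.
  by move: hv; rewrite mulmxBr mulmx1 => /eqP; rewrite subr_eq0 => /eqP <-.
suff : eigenvalue (map_mx (fun x : R => (x%:C)%C) M) 1 by move/hM; rewrite normr1 ltxx.
apply/eigenvalueP; exists (map_mx (real_complex R) v).
  by rewrite -map_mxM hvM scale1r.
by rewrite map_mx_eq0.
Qed.

Definition fixpt n (M : 'M[R]_n) (c : 'cV[R]_n) := invmx (1%:M - M) *m c.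

Lemma fixptE n (M : 'M[R]_n) c : is_Schur M -> fixpt M c = M *m fixpt M c + c.
Proof.
move=> hM; have hu := schur_unit hM.
have : (1%:M - M) *m fixpt M c = c by rewrite /fixpt mulmxA mulmxV // mul1mx.
set y := fixpt M c.
by rewrite mulmxBl mul1mx => h; rewrite -[in RHS]h addrC subrK.
Qed.

Lemma aff_diff k (M : 'M[R]_k) (u v c : 'cV[R]_k) : (M *m u + c) - (M *m v + c) = M *m (u - v).
Proof. by rewrite mulmxBr; apply/colP => i; rewrite !mxE; ring. Qed.

Lemma aff_diff3 k (M G1 G2 : 'M[R]_k) (u v a a' b b' c : 'cV[R]_k) :
  (M *m u + G1 *m a + G2 *m b + c) - (M *m v + (G1 *m a' + G2 *m b' + c)) =
  M *m (u - v) + (G1 *m (a - a') + G2 *m (b - b')).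
Proof. by rewrite !mulmxBr; apply/colP => i; rewrite !mxE; ring. Qed.

Lemma schur_of_decay n (M : 'M[R]_n) :
  (forall j : 'I_n, exists dl : nat -> 'cV[R]_n,
     [/\ dl 0%N = delta_mx j 0, (forall t, dl t.+1 = M *m dl t) & vto0 dl]) ->
  is_Schur M.
Proof.
move=> h z /eigenvalueP [v hv v0].
have [j vj] : exists j, v 0 j != 0.
  apply/existsP; apply: contraR v0 => /existsPn hj; apply/eqP/rowP => j.
  by have := hj j; rewrite negbK !mxE => /eqP.
have [dl [dl0 dS dv]] := h j.
pose f := real_complex R.
pose sig t := (v *m map_mx f (dl t)) 0 0.
have sS : forall t, sig t.+1 = z * sig t.
  by move=> t; rewrite /sig dS map_mxM mulmxA hv -scalemxAl mxE.
have s0 : sig 0%N = v 0 j.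
  by rewrite /sig dl0 map_delta_mx -colE mxE.
have sto : to0 sig.
  have hm : vto0 (fun t => map_mx f (dl t)).
    by move=> i; apply: to0_ext (to0_RC (dv i)) => t; rewrite mxE.
  by have := vto0_mul v hm 0.
rewrite nrE -(rmorph1 (real_complex R)) ltcR ltNge; apply/negP => z1.
have key : forall t, nr (sig 0%N) <= nr (sig t).
  elim => // t IH; apply: le_trans IH _.
  have : nr (sig t.+1) = nr z * nr (sig t).
    by apply: complexI; rewrite rcM -!nrE sS normrM.
  move=> ->; have := nr_ge0 (sig t); nra.
have e0 : 0 < `|sig 0%N| by rewrite normr_gt0 s0.
have [N hN] := sto _ e0.
have := hN N (leqnn N); rewrite !nrE ltcR; have := key N; lra.
Qed.

End Fix.

Section Fwd.
Variables (R : realType) (n m p q r : nat)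
  (A : 'M[R]_n) (B : 'M[R]_(n, m)) (C : 'M[R]_(p, n)) (E : 'M[R]_(n, q))
  (F : 'M[R]_(p, r)) (Lb Ll : 'M[R]_(n, p)) (Kb Kl : 'M[R]_(m, n)).

Local Notation Mk := (A + B *m (Kb + Kl)).
Local Notation Mb := (A - Lb *m C).
Local Notation Ml := (A - Ll *m C).
Local Notation cb := (Lb *m F *m ones R r - E *m ones R q).
Local Notation cl := (E *m ones R q - Ll *m F *m ones R r).
Local Notation cF := (Ll *m F *m ones R r).
Local Notation Gl := (B *m Kb + Ll *m C).
Local Notation Gb := (B *m Kb).
Local Notation dx := (dx A B C E F Lb Ll Kb Kl).
Local Notation dxb := (dxb A B C E F Lb Ll Kb Kl).
Local Notation dxl := (dxl A B C E F Lb Ll Kb Kl).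
Local Notation eb := (eb A B C E F Lb Ll Kb Kl).
Local Notation el := (el A B C E F Lb Ll Kb Kl).

Definition ebs := fixpt Mb cb.
Definition els := fixpt Ml cl.
Definition xls := fixpt Mk (Gl *m els + Gb *m ebs + cF).
Definition Xst := (xls + els, xls + els + ebs, xls).

Lemma conv_all X0 : is_Schur Mk -> is_Schur Mb -> is_Schur Ml ->
  [/\ vto0 (fun t => eb X0 t - ebs), vto0 (fun t => el X0 t - els) &
      vto0 (fun t => dxl X0 t - xls)].
Proof.
move=> hk hb hl.
have hdb : vto0 (fun t => eb X0 t - ebs).
  apply: (track_R hb (e := fun _ => 0)); last exact: vto0_0.
  by move=> t; rewrite eb_S {1}/ebs (fixptE _ hb) aff_diff addr0.
have hdl : vto0 (fun t => el X0 t - els).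
  apply: (track_R hl (e := fun _ => 0)); last exact: vto0_0.
  by move=> t; rewrite el_S {1}/els (fixptE _ hl) aff_diff addr0.
split => //.
apply: (track_R hk (e := fun t => Gl *m (el X0 t - els) + Gb *m (eb X0 t - ebs))).
  by move=> t; rewrite xl_S {1}/xls (fixptE _ hk) aff_diff3.
by apply: vto0D; apply: vto0_mul.
Qed.

Lemma forward :
  is_Schur Mk -> is_Schur Mb -> is_Schur Ml ->
  mx_nonneg Mk -> mx_nonneg Gl -> mx_nonneg Gb -> mx_nonneg Mb -> mx_nonneg Ml ->
  mx_nonneg cb -> mx_nonneg cl -> mx_nonneg cF ->
  in_calX Xst /\
  forall X0, in_calX X0 ->
    (forall t, in_calX (dx X0 t, dxb X0 t, dxl X0 t)) /\
    (dx X0 @ \oo --> Xst.1.1) /\ (dxb X0 @ \oo --> Xst.1.2) /\ (dxl X0 @ \oo --> Xst.2).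
Proof.
move=> hk hb hl n1 n2 n3 n4 n5 n6 n7 n8.
have hinv := invariance n1 n2 n3 n4 n5 n6 n7 n8.
split.
  pose Z : 'cV[R]_n * 'cV[R]_n * 'cV[R]_n := (0, 0, 0).
  have hZ : in_calX Z by apply: calX_of; rewrite ?subrr; apply/cv_le0P => i; rewrite mxE.
  have [c1 c2 c3] := conv_all Z hk hb hl.
  have [h1 h2 h3] : [/\ cv_le 0 ebs, cv_le 0 els & cv_le 0 xls].
    split.
    - by apply: (lim_nn c1) => t; have [] := calX_to (hinv _ hZ t).
    - by apply: (lim_nn c2) => t; have [] := calX_to (hinv _ hZ t).
    - by apply: (lim_nn c3) => t; have [] := calX_to (hinv _ hZ t).
  apply: calX_of => //.
  - by rewrite addrC addKr.
  - by rewrite addrC addKr.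
move=> X0 hX0; split; first exact: hinv.
have [c1 c2 c3] := conv_all X0 hk hb hl.
split; last split.
- apply: vto0_cvg; apply: vto0_ext (vto0D c3 c2) => t.
  by rewrite /el /=; apply/colP => i; rewrite !mxE; ring.
- apply: vto0_cvg; apply: vto0_ext (vto0D (vto0D c3 c2) c1) => t.
  by rewrite /el /eb /=; apply/colP => i; rewrite !mxE; ring.
- exact: vto0_cvg.
Qed.


Lemma vec_nn k (c : 'cV[R]_k) : cv_le 0 c -> mx_nonneg c.
Proof. by move/cv_le0P => h i j; rewrite (ord1 j). Qed.

Lemma zero_nn k : cv_le 0 (0 : 'cV[R]_k).
Proof. by move=> i. Qed.

Lemma backward (Xs : 'cV[R]_n * 'cV[R]_n * 'cV[R]_n) :
  mx_nonneg A ->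
  (forall X0, in_calX X0 ->
    (forall t, in_calX (dx X0 t, dxb X0 t, dxl X0 t)) /\
    (dx X0 @ \oo --> Xs.1.1) /\ (dxb X0 @ \oo --> Xs.1.2) /\ (dxl X0 @ \oo --> Xs.2)) ->
  ( [/\ is_Schur (A + B *m (Kb + Kl)), is_Schur (A - Lb *m C) & is_Schur (A - Ll *m C)]
    /\
    (mx_nonneg (A + B *m (Kb + Kl)) /\ mx_nonneg (A + B *m Kb) /\
     mx_nonneg (B *m Kb) /\ mx_nonneg (A - Lb *m C) /\ mx_nonneg (A - Ll *m C) /\
     mx_nonneg (B *m Kb + Ll *m C))
    /\
    [/\ mx_nonneg (Lb *m F *m ones R r - E *m ones R q),
        mx_nonneg (E *m ones R q - Ll *m F *m ones R r)
      & mx_nonneg (Ll *m F *m ones R r)] ).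
Proof.
move=> hA H.
have step1 : forall xl0 el0 eb0, cv_le 0 xl0 -> cv_le 0 el0 -> cv_le 0 eb0 ->
    [/\ cv_le 0 (Mk *m xl0 + Gl *m el0 + Gb *m eb0 + cF),
        cv_le 0 (Ml *m el0 + cl) & cv_le 0 (Mb *m eb0 + cb)].
  move=> xl0 el0 eb0 h1 h2 h3.
  pose X0 := (xl0 + el0, xl0 + el0 + eb0, xl0).
  have hX0 : in_calX X0 by apply: calX_of; rewrite //= addrC addKr.
  have [hinv _] := H X0 hX0.
  have [a1 a2 a3] := calX_to (hinv 1%N).
  have e1 : el X0 0 = el0 by rewrite /el /= addrC addKr.
  have e2 : eb X0 0 = eb0 by rewrite /eb /= addrC addKr.
  split.
  - by move: a1; rewrite xl_S e1 e2.
  - by move: a2; rewrite -/(el X0 1%N) el_S e1.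
  - by move: a3; rewrite -/(eb X0 1%N) eb_S e2.
have z := @zero_nn n.
have [s1 s2 s3] := step1 _ _ _ z z z.
rewrite !mulmx0 !add0r in s1 s2 s3.
have hMk : mx_nonneg Mk.
  apply: ent_nonneg => s s0 j; have [h _ _] := step1 _ _ _ (delta_nn j (ltW s0)) z z.
  by rewrite !mulmx0 !addr0 in h.
have hGl : mx_nonneg Gl.
  apply: ent_nonneg => s s0 j; have [h _ _] := step1 _ _ _ z (delta_nn j (ltW s0)) z.
  by rewrite !mulmx0 add0r addr0 in h.
have hGb : mx_nonneg Gb.
  apply: ent_nonneg => s s0 j; have [h _ _] := step1 _ _ _ z z (delta_nn j (ltW s0)).
  by rewrite !mulmx0 !add0r in h.
have hMl : mx_nonneg Ml.
  by apply: ent_nonneg => s s0 j; have [_ h _] := step1 _ _ _ z (delta_nn j (ltW s0)) z.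
have hMb : mx_nonneg Mb.
  by apply: ent_nonneg => s s0 j; have [_ _ h] := step1 _ _ _ z z (delta_nn j (ltW s0)).
have hABK : mx_nonneg (A + B *m Kb).
  by move=> i j; have := hGb i j; rewrite [(A + _) i j]mxE => h; exact: addr_ge0 (hA i j) h.
split; last first.
  by split; [do !split => // | split; apply: vec_nn].
pose Z : 'cV[R]_n * 'cV[R]_n * 'cV[R]_n := (0, 0, 0).
have hZ : in_calX Z by apply: calX_of; rewrite ?subrr.
have [_ [cZ1 [cZ2 cZ3]]] := H Z hZ.
have dnn := fun j : 'I_n => delta_nn j (@ler01 R).
split.
- apply: schur_of_decay => j.
  pose X1 := ((1 *: delta_mx j 0 : 'cV[R]_n), (1 *: delta_mx j 0 : 'cV[R]_n), (1 *: delta_mx j 0 : 'cV[R]_n)).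
  have hX1 : in_calX X1 by apply: calX_of; rewrite ?subrr.
  have [_ [c1 [c2 c3]]] := H X1 hX1.
  have hel : forall t, el X1 t = el Z t.
    elim => [|t IH]; first by rewrite /el /= !subrr.
    by rewrite !el_S IH.
  have heb : forall t, eb X1 t = eb Z t.
    elim => [|t IH]; first by rewrite /eb /= !subrr.
    by rewrite !eb_S IH.
  exists (fun t => dxl X1 t - dxl Z t); split.
  + by rewrite /X1 /= subr0 scale1r.
  + move=> t; rewrite mulmxBr !xl_S hel heb; apply/colP => i; rewrite !mxE; ring.
  + apply: vto0_ext (vto0D (cvg_vto0 c3) (vto0N (cvg_vto0 cZ3))) => t.
    by apply/colP => i; rewrite !mxE; ring.
- apply: schur_of_decay => j.
  pose X1 := ((0 : 'cV[R]_n), (1 *: delta_mx j 0 : 'cV[R]_n), (0 : 'cV[R]_n)).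
  have hX1 : in_calX X1 by apply: calX_of; rewrite //= ?subrr ?subr0.
  have [_ [c1 [c2 c3]]] := H X1 hX1.
  exists (fun t => eb X1 t - eb Z t); split.
  + by rewrite /eb /X1 /= !subr0 scale1r.
  + by move=> t; rewrite !eb_S aff_diff.
  + apply: vto0_ext (vto0D (vto0D (cvg_vto0 c2) (vto0N (cvg_vto0 c1)))
                    (vto0N (vto0D (cvg_vto0 cZ2) (vto0N (cvg_vto0 cZ1))))) => t.
    by rewrite /eb; apply/colP => i; rewrite !mxE; ring.
- apply: schur_of_decay => j.
  pose X1 := ((1 *: delta_mx j 0 : 'cV[R]_n), (1 *: delta_mx j 0 : 'cV[R]_n), (0 : 'cV[R]_n)).
  have hX1 : in_calX X1 by apply: calX_of; rewrite //= ?subrr ?subr0.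
  have [_ [c1 [c2 c3]]] := H X1 hX1.
  exists (fun t => el X1 t - el Z t); split.
  + by rewrite /el /X1 /= !subr0 scale1r.
  + by move=> t; rewrite !el_S aff_diff.
  + apply: vto0_ext (vto0D (vto0D (cvg_vto0 c1) (vto0N (cvg_vto0 c3)))
                    (vto0N (vto0D (cvg_vto0 cZ1) (vto0N (cvg_vto0 cZ3))))) => t.
    by rewrite /el; apply/colP => i; rewrite !mxE; ring.
Qed.

End Fwd.

Unset Implicit Arguments. Set Strict Implicit. Set Printing Implicit Defensive.

Theorem theorem2 (d : measure_display) (T : measurableType d) (R : realType)
  (P : probability T R) (n m p q r : nat)
  (A : 'M[R]_n) (B : 'M[R]_(n, m)) (C : 'M[R]_(p, n)) (E : 'M[R]_(n, q))
  (F : 'M[R]_(p, r)) (Lb Ll : 'M[R]_(n, p)) (Kb Kl : 'M[R]_(m, n))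
  (w : nat -> T -> 'cV[R]_q) (v : nat -> T -> 'cV[R]_r) :
  mx_nonneg A -> mx_nonneg E ->
  (* w(t) in R^q_+, v(t) in R^r_+ random vectors with E[w(t)] = E[v(t)] = 1 *)
  (forall t om, cv_le 0 (w t om)) -> (forall t om, cv_le 0 (v t om)) ->
  (forall t i, measurable_fun setT (fun om => w t om i 0)) ->
  (forall t i, measurable_fun setT (fun om => v t om i 0)) ->
  (forall t i, expectation P (fun om => w t om i 0) = 1%E) ->
  (forall t i, expectation P (fun om => v t om i 0) = 1%E) ->
  ( [/\ is_Schur (A + B *m (Kb + Kl)), is_Schur (A - Lb *m C) & is_Schur (A - Ll *m C)]
    /\
    (mx_nonneg (A + B *m (Kb + Kl)) /\ mx_nonneg (A + B *m Kb) /\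
     mx_nonneg (B *m Kb) /\ mx_nonneg (A - Lb *m C) /\ mx_nonneg (A - Ll *m C) /\
     mx_nonneg (B *m Kb + Ll *m C))
    /\
    [/\ mx_nonneg (Lb *m F *m ones R r - E *m ones R q),
        mx_nonneg (E *m ones R q - Ll *m F *m ones R r)
      & mx_nonneg (Ll *m F *m ones R r)] )
  <->
  ( exists Xstar : 'cV[R]_n * 'cV[R]_n * 'cV[R]_n,
      in_calX Xstar /\
      forall x0 xb0 xl0 : T -> 'cV[R]_n,
        integrable_rvec P x0 -> integrable_rvec P xb0 -> integrable_rvec P xl0 ->
        (forall om, cv_le 0 (x0 om)) ->
        in_calX (Evec P x0, Evec P xb0, Evec P xl0) ->
        let X := fun t =>
          (Evec P (fun om => (traj A B C E F Lb Ll Kb Kl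
                                (w^~ om) (v^~ om) (x0 om) (xb0 om) (xl0 om) t).1.1),
           Evec P (fun om => (traj A B C E F Lb Ll Kb Kl
                                (w^~ om) (v^~ om) (x0 om) (xb0 om) (xl0 om) t).1.2),
           Evec P (fun om => (traj A B C E F Lb Ll Kb Kl
                                (w^~ om) (v^~ om) (x0 om) (xb0 om) (xl0 om) t).2)) in
        (forall t, in_calX (X t)) /\
        ((fun t => (X t).1.1) @ \oo --> Xstar.1.1) /\
        ((fun t => (X t).1.2) @ \oo --> Xstar.1.2) /\
        ((fun t => (X t).2) @ \oo --> snd Xstar) ).
Proof.
move=> hA hE hw0 hv0 hwm hvm hwe hve.
have hw : forall t, Ehas P (w t) (ones R q) by move=> t; apply: Ehas_rand.
have hv : forall t, Ehas P (v t) (ones R r) by move=> t; apply: Ehas_rand.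
have link : forall (x0 xb0 xl0 : T -> 'cV[R]_n) X0 XB0 XL0,
    Ehas P x0 X0 -> Ehas P xb0 XB0 -> Ehas P xl0 XL0 -> forall t,
    [/\ Evec P (fun om => (traj A B C E F Lb Ll Kb Kl
                                (w^~ om) (v^~ om) (x0 om) (xb0 om) (xl0 om) t).1.1)
          = dx A B C E F Lb Ll Kb Kl (X0, XB0, XL0) t,
        Evec P (fun om => (traj A B C E F Lb Ll Kb Kl
                                (w^~ om) (v^~ om) (x0 om) (xb0 om) (xl0 om) t).1.2)
          = dxb A B C E F Lb Ll Kb Kl (X0, XB0, XL0) t &
        Evec P (fun om => (traj A B C E F Lb Ll Kb Kl
                                (w^~ om) (v^~ om) (x0 om) (xb0 om) (xl0 om) t).2)
          = dxl A B C E F Lb Ll Kb Kl (X0, XB0, XL0) t].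
  move=> x0 xb0 xl0 X0 XB0 XL0 h0 h1 h2 t.
  have [e1 e2 e3] := Ehas_traj A B C E F Lb Ll Kb Kl hw hv h0 h1 h2 t.
  by split; apply: Ehas_Evec.
split.
- move=> [[hk hb hl] [[n1 [n2 [n3 [n4 [n5 n6]]]]] [c1 c2 c3]]].
  have [hX hall] := forward hk hb hl n1 n6 n3 n4 n5 c1 c2 c3.
  exists (Xst A B C E F Lb Ll Kb Kl); split => // x0 xb0 xl0 i0 ib il hx0 hcal X.
  have [hinv [k1 [k2 k3]]] := hall _ hcal.
  have eX := link _ _ _ _ _ _ (integrable_Ehas i0) (integrable_Ehas ib) (integrable_Ehas il).
  have eX1 : (fun t => (X t).1.1) = dx A B C E F Lb Ll Kb Kl (Evec P x0, Evec P xb0, Evec P xl0).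
    by apply/funext => t; have [e1 _ _] := eX t; rewrite /X e1.
  have eX2 : (fun t => (X t).1.2) = dxb A B C E F Lb Ll Kb Kl (Evec P x0, Evec P xb0, Evec P xl0).
    by apply/funext => t; have [_ e2 _] := eX t; rewrite /X e2.
  have eX3 : (fun t => (X t).2) = dxl A B C E F Lb Ll Kb Kl (Evec P x0, Evec P xb0, Evec P xl0).
    by apply/funext => t; have [_ _ e3] := eX t; rewrite /X e3.
  rewrite eX1 eX2 eX3; split => //.
  by move=> t; have [e1 e2 e3] := eX t; rewrite /X e1 e2 e3.
- move=> [Xs [hXs H]]; apply: (backward (Xs := Xs)) => // -[[x xb] xl] hX0.
  have hc := fun c : 'cV[R]_n => Ehas_cst P c.
  have := H (fun _ => x) (fun _ => xb) (fun _ => xl)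
    (Ehas_integrable (hc x)) (Ehas_integrable (hc xb)) (Ehas_integrable (hc xl)).
  have [hx _ _ _ _] := hX0.
  rewrite !(Ehas_Evec (hc _)) => /(_ (fun _ => hx) hX0).
  cbv zeta => -[hinv [k1 [k2 k3]]].
  have eX := link _ _ _ _ _ _ (hc x) (hc xb) (hc xl).
  split; last split; last split.
  + by move=> t; have [e1 e2 e3] := eX t; rewrite -e1 -e2 -e3.
  + move: k1; rewrite (@eq_cvg _ _ _ _ (fun t => _) _ (fun t => match eX t with And3 e _ _ => e end)) //.  
  + move: k2; rewrite (@eq_cvg _ _ _ _ (fun t => _) _ (fun t => match eX t with And3 _ e _ => e end)) //.  
  + move: k3; rewrite (@eq_cvg _ _ _ _ (fun t => _) _ (fun t => match eX t with And3 _ _ e => e end)) //.  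
Qed.
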